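(* Let $m\ge 2$ and let $k_1,k_2,\dots,k_{2m}$ be positive integers such that $k_i+k_{i+1}\ge 3$ for all $i\in\{1,3,\dots,2m-1\}$. Then every tournament of order $m+\sum_{i=1}^{2m}k_i$ contains a subdivision of $C(k_1,k_2,\dots,k_{2m})$ having at least $m$ non-dilated blocks.
   Context: A tournament is an orientation of a complete graph. A block of an oriented path or cycle is a maximal directed subpath. $C(k_1,k_2,\dots,k_{2m})$ denotes the oriented cycle with $2m$ blocks of consecutive lengths $k_1,k_2,\dots,k_{2m}$. A subdivision of a digraph $H$ is obtained by replacing each arc $(u,v)$ by a directed $uv$-path of length at least $1$ (internally disjoint); a subdivision $H'$ of a $2m$-blocks cycle $C$ is again a $2m$-blocks cycle whose blocks correspond to those of $C$. A block of $H'$ is dilated if its length in $H'$ is strictly greater than the length of the corresponding block of $C$, and non-dilated otherwise. *)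

(* Defs.v *)
From mathcomp Require Import all_boot.
Set Implicit Arguments. Unset Strict Implicit. Unset Printing Implicit Defensive.

Definition tournament (T : finType) (adj : rel T) : Prop :=
  (forall x, ~~ adj x x) /\ (forall x y, x != y -> adj x y = ~~ adj y x).

(* 0-based index of the block containing arc position j of the cycle with
   consecutive block lengths l (valid for j < sumn l): the number of
   (inclusive) prefix sums of l that are <= j. *)
Definition block_of (l : seq nat) (j : nat) : nat :=
  count (fun i => sumn (take i.+1 l) <= j) (iota 0 (size l)).

(* T contains (as a subdigraph) the oriented cycle C(l_1,...,l_r):
   vertices f 0, ..., f (n-1) (distinct), n = sumn l, arc position j joins
   f j and f (j+1 mod n); arcs of blocks 1,3,5,... (0-based even index) are
   oriented along the traversal, those of blocks 2,4,... against it. *)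
Definition contains_cycle (T : finType) (adj : rel T) (l : seq nat) : Prop :=
  exists f : 'I_(sumn l) -> T,
    injective f /\
    forall j : 'I_(sumn l),
      if ~~ odd (block_of l j) then adj (f j) (f (ordS j))
      else adj (f (ordS j)) (f j).

(* Block lengths l of a subdivision of C(k): each block of length k_i becomes
   a directed path of length l_i >= k_i. *)
Definition subdivision_blocks (k l : seq nat) : Prop :=
  size l = size k /\ forall i, i < size k -> nth 0 k i <= nth 0 l i.

Definition non_dilated (k l : seq nat) : nat :=
  count (fun i => nth 0 l i == nth 0 k i) (iota 0 (size k)).

(* Main.v *)
Require Import Defs.
From mathcomp Require Import all_boot zify.
Set Implicit Arguments. Unset Strict Implicit. Unset Printing Implicit Defensive.

Fixpoint pat (b : bool) (l : seq nat) : seq bool :=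
  if l is n :: l' then nseq n b ++ pat (~~ b) l' else [::].

Fixpoint Kf (ps : seq (nat * nat)) : seq nat :=
  if ps is pq :: ps' then pq.1 :: pq.2 :: Kf ps' else [::].

Fixpoint Lf (c : bool) (ps : seq (nat * nat)) (ds : seq bool) : seq nat :=
  match ps, ds with
  | pq :: ps', d :: ds' => (pq.1 + c) :: (pq.2 + ~~ d) :: Lf d ps' ds'
  | _, _ => [::] end.

Fixpoint Pf (ps : seq (nat * nat)) (ds : seq bool) : seq bool :=
  match ps, ds with
  | pq :: ps', d :: ds' => nseq pq.1 true ++ nseq pq.2 false ++ d :: Pf ps' ds'
  | _, _ => [::] end.

Lemma nseq_catS T n (x : T) s : nseq n x ++ x :: s = nseq n.+1 x ++ s.
Proof. by elim: n => //= n ->. Qed.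

Lemma PfL ps ds (c : bool) : size ps = size ds ->
  nseq c true ++ Pf ps ds = pat true (Lf c ps ds) ++ nseq (last c ds) true.
Proof.
elim: ps ds c => [|[p q] ps IH] [|d ds] c //=; first by rewrite cats0.
case=> /IH {}IH.
rewrite -!catA -IH catA -nseqD addnC; congr (_ ++ _).
by case: d => /=; rewrite ?addn0 ?addn1 // nseq_catS.
Qed.

Lemma block_of_cons n l j :
  block_of (n :: l) j = if j < n then 0 else (block_of l (j - n)).+1.
Proof.
rewrite /block_of /= -[1]addn0 iotaDl count_map /=.
rewrite take0 /= addn0.
case: ltnP => hj.
  rewrite add0n; apply/eqP; rewrite -leqn0 leqNgt -has_count.
  apply/hasP => -[i _ /=]; rewrite add1n /=; lia.
rewrite add1n; congr (_.+1); apply: eq_count => i /=.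
rewrite add1n /=; apply/idP/idP; lia.
Qed.

Lemma nth_pat b l j : j < sumn l ->
  nth false (pat b l) j = if odd (block_of l j) then ~~ b else b.
Proof.
elim: l b j => [|n l IH] b j //= hj.
rewrite block_of_cons nth_cat size_nseq.
case: ltnP => h; first by rewrite nth_nseq h.
rewrite IH /=; last by lia.
by case: odd; case: b.
Qed.

Lemma size_pat b l : size (pat b l) = sumn l.
Proof. by elim: l b => [|n l IH] b //=; rewrite size_cat size_nseq IH. Qed.

Lemma size_LfK c ps ds : size ps = size ds -> size (Lf c ps ds) = size (Kf ps).
Proof. by elim: ps ds c => [|[p q] ps IH] [|d ds] c //= [] /IH ->. Qed.

Lemma nth_LfK c ps ds i : size ps = size ds -> nth 0 (Kf ps) i <= nth 0 (Lf c ps ds) i.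
Proof.
elim: ps ds c i => [|[p q] ps IH] [|d ds] c i //=.
by case=> /IH h; case: i => [|[|i]] //=; rewrite ?leq_addr.
Qed.

Lemma nd_cons x k y l : non_dilated (x :: k) (y :: l) = (y == x) + non_dilated k l.
Proof.
rewrite /non_dilated /= -[1]addn0 iotaDl count_map; congr (_ + _).
Qed.

Lemma nd_Lf (c : bool) ps ds : size ps = size ds ->
  non_dilated (Kf ps) (Lf c ps ds) + c = size ps + last c ds.
Proof.
elim: ps ds c => [|[p q] ps IH] [|d ds] c //=.
case=> /IH {}IH.
rewrite !nd_cons /=.
have := IH d; case: c; case: d => /=; rewrite ?addn0 ?addn1 ?eqxx ?eqSS; lia.
Qed.


Section Tour.
Variables (T : finType) (adj : rel T).
Hypothesis tour : tournament adj.

Definition arc (o : bool) x y := if o then adj x y else adj y x.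

Fixpoint opath (x : T) (s : seq T) (O : seq bool) : bool :=
  match s, O with
  | [::], [::] => true
  | y :: s', o :: O' => arc o x y && opath y s' O'
  | _, _ => false end.

Lemma opath_size x s O : opath x s O -> size O = size s.
Proof. by elim: s x O => [|y s IH] x [|o O] //= /andP[_ /IH ->]. Qed.

Lemma opath_cat x s1 s2 O1 O2 : size s1 = size O1 ->
  opath x (s1 ++ s2) (O1 ++ O2) = opath x s1 O1 && opath (last x s1) s2 O2.
Proof.
elim: s1 x O1 => [|y s IH] x [|o O] //= [] /IH ->; by rewrite andbA.
Qed.

Lemma opath_true x s : opath x s (nseq (size s) true) = path adj x s.
Proof. by elim: s x => [|y s IH] x //=; rewrite IH. Qed.

Lemma opath_false x s : opath x s (nseq (size s) false) = path (fun a b => adj b a) x s.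
Proof. by elim: s x => [|y s IH] x //=; rewrite IH. Qed.

Lemma opath_nth x s O j : opath x s O -> j < size s ->
  arc (nth false O j) (nth x (x :: s) j) (nth x s j).
Proof.
elim: s x O j => [|y s IH] x [|o O] j //= /andP[h1 h2].
case: j => [|j] //= hj.
rewrite [nth x (y :: s) j](set_nth_default y x) /=; last by lia.
rewrite [nth x s j](set_nth_default y x); last by lia.
by apply: IH.
Qed.

Lemma cycle_of l x s : uniq (x :: s) -> size (x :: s) = sumn l ->
  opath x (rcons s x) (pat true l) -> contains_cycle adj l.
Proof.
move=> hu hs hp.
exists (fun j => nth x (x :: s) j); split.
  move=> i j /eqP; rewrite nth_uniq ?hs //; first by move/eqP/val_inj.
move=> j.
have hj : j < size (rcons s x) by rewrite size_rcons -[(size s).+1]/(size (x :: s)) hs.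
have := opath_nth hp hj.
rewrite nth_pat; last exact: ltn_ord.
have -> : nth x (rcons s x) j = nth x (x :: s) (ordS j).
  rewrite /= nth_rcons.
  have hn : sumn l = (size s).+1 by rewrite -hs.
  have hj' := ltn_ord j.
  case: (ltnP j (size s)) => h.
    by rewrite modn_small /=; last by lia.
  have e : j.+1 = sumn l by lia.
  rewrite e modnn /=.
  have -> : nat_of_ord j = size s by lia.
  by rewrite eqxx.
rewrite -rcons_cons nth_rcons hs ltn_ord /arc.
by case: odd.
Qed.

End Tour.


Section Deg.
Variables (T : finType) (adj : rel T).
Hypothesis tour : tournament adj.

Lemma adj_irr x : adj x x = false.
Proof. by apply/negbTE; case: tour. Qed.

Lemma adj_asym x y : adj x y -> adj y x = false.
Proof.
move=> h; case: (eqVneq x y) => [<-|ne]; first by rewrite adj_irr.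
by case: tour => _ /(_ _ _ ne); rewrite h; case: (adj y x).
Qed.

Lemma adj_tot x y : x != y -> ~~ adj x y -> adj y x.
Proof. by case: tour => _ /[apply] ->; rewrite negbK. Qed.

Definition indeg (s : seq T) v := \sum_(u <- s) adj u v.

Lemma sum_le (s : seq T) (F G : T -> nat) :
  (forall v, v \in s -> F v <= G v) -> \sum_(v <- s) F v <= \sum_(v <- s) G v.
Proof.
elim: s => [|x s IH] h; rewrite ?big_nil ?big_cons //.
apply: leq_add; first by apply: h; rewrite inE eqxx.
by apply: IH => v hv; apply: h; rewrite inE hv orbT.
Qed.

Lemma sum_const (s : seq T) c : \sum_(v <- s) c = size s * c.
Proof. by elim: s => [|x s IH]; rewrite ?big_nil ?big_cons //= IH mulSn. Qed.

Lemma sum_neq (s : seq T) v : \sum_(u <- s) (u != v) + count_mem v s = size s.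
Proof.
elim: s => [|x s IH]; rewrite ?big_nil ?big_cons //=.
by rewrite -IH; case: (x == v); rewrite /= ?add0n ?add1n ?addSn ?addnS.
Qed.

Lemma indeg_total s : uniq s ->
  \sum_(v <- s) indeg s v * 2 = size s * (size s).-1.
Proof.
move=> us.
have h1 : \sum_(v <- s) \sum_(u <- s) (adj u v + adj v u) = size s * (size s).-1.
  rewrite -sum_const; apply: eq_big_seq => v vs.
  have <- : \sum_(u <- s) (u != v) = (size s).-1.
    by have := sum_neq s v; rewrite count_uniq_mem // vs => <-; rewrite addn1.
  apply: eq_big_seq => u us'.
  case: (eqVneq u v) => [->|ne]; first by rewrite adj_irr.
  case h: (adj u v); first by rewrite adj_asym.
  by rewrite adj_tot ?h.
have h2 : \sum_(v <- s) \sum_(u <- s) (adj u v + adj v u) =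
    \sum_(v <- s) indeg s v + \sum_(v <- s) \sum_(u <- s) adj v u.
  by rewrite -big_split; apply: eq_bigr => v _; rewrite big_split.
rewrite [X in _ + X](exchange_big _ s s) /= in h2.
rewrite -h1 h2 -big_split /=; apply: eq_bigr => v _.
by rewrite muln2 -addnn.
Qed.

Lemma exists_min s : uniq s -> s != [::] ->
  exists2 v, v \in s & indeg s v * 2 <= (size s).-1.
Proof.
move=> us ne.
case: (boolP (has (fun v => indeg s v * 2 <= (size s).-1) s)) => [/hasP[v ? ?]|h].
  by exists v.
have : \sum_(v <- s) size s <= \sum_(v <- s) indeg s v * 2.
  apply: sum_le => v vs; move/hasPn: h => /(_ v vs); lia.
rewrite indeg_total // sum_const; case: s ne {us h} => // x s _ /=; nia.
Qed.

Lemma exists_max s : uniq s -> s != [::] ->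
  exists2 v, v \in s & (size s).-1 <= indeg s v * 2 /\
    forall u, u \in s -> indeg s u <= indeg s v.
Proof.
move=> us ne.
have [x0 x0s] : exists x, x \in s by case: s ne {us} => // x s; exists x; rewrite inE eqxx.
case: (@arg_maxnP T x0 (mem s) (indeg s) x0s) => v vs vmax.
exists v => //; split=> //.
rewrite leqNgt; apply/negP => lt.
have : \sum_(u <- s) indeg s u * 2 <= \sum_(u <- s) (size s).-2.
  apply: sum_le => u us'; have := vmax u us'; lia.
rewrite indeg_total // sum_const; move: lt; case: s ne {us x0s vs vmax} => // x [|y s] _ /=; nia.
Qed.

Definition ipath (W : seq T) b := if W is x :: W' then path adj x (rcons W' b) else true.

Lemma ipath_rcons W c d : ipath (rcons W c) d = ipath W c && adj c d.
Proof. by case: W => [|x W] /=; rewrite ?andbT // rcons_path last_rcons. Qed.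

Lemma ipath_cons2 x y W b : ipath [:: x, y & W] b = adj x y && ipath (y :: W) b.
Proof. by []. Qed.

Lemma ipath1 x b : ipath [:: x] b = adj x b.
Proof. by rewrite /= andbT. Qed.

Lemma ipath_behead x W b : ipath (x :: W) b -> ipath W b.
Proof. by case: W => //= y W /andP[]. Qed.

Lemma indeg_cons x s v : indeg (x :: s) v = adj x v + indeg s v.
Proof. by rewrite /indeg big_cons. Qed.

Lemma indeg_cat s1 s2 v : indeg (s1 ++ s2) v = indeg s1 v + indeg s2 v.
Proof. by rewrite /indeg big_cat. Qed.

Lemma indeg_perm s1 s2 v : perm_eq s1 s2 -> indeg s1 v = indeg s2 v.
Proof. by move=> h; rewrite /indeg (perm_big _ h). Qed.

Lemma indeg_all s v : (forall w, w \in s -> adj w v) -> indeg s v = size s.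
Proof.
elim: s => [|x s IH] h; first by rewrite /indeg big_nil.
rewrite indeg_cons h ?inE ?eqxx // IH // => w hw; by apply: h; rewrite inE hw orbT.
Qed.

Lemma indeg0 s v : indeg s v = 0 -> forall w, w \in s -> ~~ adj w v.
Proof.
elim: s => [|x s IH] //; rewrite indeg_cons => h w; rewrite inE => /orP[/eqP->|hw].
  by move: h; case: (adj x v).
by apply: IH => //; move: h; case: (adj x v).
Qed.

Lemma perm_sw x y (s : seq T) : perm_eq [:: x, y & s] [:: y, x & s].
Proof. by apply/permP => a /=; rewrite addnCA. Qed.

Lemma ins v b : forall W x, path adj x (rcons W b) -> v \notin rcons W b ->
  adj x v -> has (adj v) (rcons W b) ->
  exists W', path adj x (rcons W' b) /\ perm_eq W' (v :: W).
Proof.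
elim=> [|y W IH] x /=.
  move=> _ _ hxv; rewrite orbF => hvb.
  by exists [:: v]; rewrite /= hxv hvb perm_refl.
move=> /andP[hxy hp]; rewrite inE negb_or => /andP[hvy hv] hxv.
case hvy': (adj v y).
  by move=> _; exists [:: v, y & W]; rewrite /= hxv hvy' hp perm_refl.
rewrite /= => hh.
have hyv : adj y v by apply: adj_tot; rewrite ?hvy'.
have [W' [h1 h2]] := IH y hp hv hyv hh.
exists (y :: W'); split; first by rewrite /= hxy.
apply: (@perm_trans _ (y :: v :: W)); first by rewrite perm_cons.
exact: perm_sw.
Qed.

Lemma ins2 v b W : ipath W b -> W != [::] -> v \notin rcons W b ->
  has (adj v) (rcons W b) -> exists W', ipath W' b /\ perm_eq W' (v :: W).
Proof.
case: W => // w W /= hp _ hv.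
case hvw: (adj v w).
  by move=> _; exists [:: v, w & W]; rewrite /= hvw hp perm_refl.
rewrite /= => hh.
move: hv; rewrite inE negb_or => /andP[hvw' hv].
have hwv : adj w v by apply: adj_tot; rewrite ?hvw.
have [W' [h1 h2]] := ins hp hv hwv hh.
exists (w :: W'); split; first by [].
apply: (@perm_trans _ (w :: v :: W)); first by rewrite perm_cons.
exact: perm_sw.
Qed.


Lemma notin_sub (v : T) (s' S : seq T) : v \notin s' -> perm_eq S s' -> v \notin S.
Proof. by move=> h hp; rewrite (perm_mem hp). Qed.

Ltac clia := repeat match goal with H : _ |- _ => clear H end; lia.

Lemma wedge n : forall p q (s : seq T), p + q + 1 = n -> 0 < p -> 0 < q -> 3 <= p + q ->
  uniq s -> size s = n ->
  exists b W1 W2, [/\ size W1 = p, size W2 = q, ipath W1 b, ipath W2 b &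
                      perm_eq (b :: W1 ++ W2) s].
Proof.
elim: n => [|n IH] p q s; first by move=> hn; move: hn; clia.
wlog qp : p q / q <= p.
  move=> H hn hp hq h3 us ss; case: (leqP q p) => qp; first by apply: H.
  have e1 : q + p + 1 = n.+1 by move: hn; clia.
  have e2 : 3 <= q + p by move: h3; clia.
  have [b [W1 [W2 [h1 h2 h3' h4 h5]]]] := H q p (ltnW qp) e1 hq hp e2 us ss.
  exists b, W2, W1; split=> //; apply: (perm_trans _ h5).
  by apply/permP=> a /=; rewrite !count_cat [count a W2 + _]addnC.
move=> hn hp hq h3 us ss.
have sne : s != [::] by case: s ss us.
case: (ltnP 4 n.+1) => big.
- have [v vs vmin] := exists_min us sne.
  rewrite ss /= in vmin.
  set s' := rem v s.
  have ps : perm_eq s (v :: s') := perm_to_rem vs.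
  have us' : uniq (v :: s') by rewrite -(perm_uniq ps).
  have ss' : size s' = n by rewrite size_rem // ss.
  have vns : v \notin s' by case/andP: us'.
  have us'' : uniq s' by case/andP: us'.
  have indv : indeg s v = indeg s' v by rewrite (indeg_perm _ ps) indeg_cons adj_irr.
  have p2 : 1 < p by move: hn big qp h3; clia.
  have ext : forall b W1 W2, size W1 = p.-1 -> ipath W1 b -> perm_eq (b :: W1 ++ W2) s' ->
      has (adj v) (rcons W1 b) ->
      exists W1', [/\ size W1' = p, ipath W1' b & perm_eq (b :: W1' ++ W2) s].
    move=> b W1 W2 hs1 hi hpe hh.
    have hv : v \notin rcons W1 b.
      apply: contra vns => hvin; rewrite -(perm_mem hpe) inE mem_cat.
      by move: hvin; rewrite mem_rcons inE => /orP[->|->]; rewrite ?orbT.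
    have W1ne : W1 != [::] by apply/eqP => e; move: hs1 p2; rewrite e /=; clia.
    have [W1' [h1 h2]] := ins2 hi W1ne hv hh.
    exists W1'; split=> //; first by rewrite (perm_size h2) /= hs1; move: p2; clia.
    apply/permP => a; move: (permP hpe a) (permP ps a) (permP h2 a).
    rewrite /= !count_cat /=; clia.
  have allin : forall b W1 W2, perm_eq (b :: W1 ++ W2) s' -> ~~ has (adj v) (rcons W1 b) ->
      forall w, w \in b :: W1 -> adj w v.
    move=> b W1 W2 hpe /hasPn hh w hw.
    apply: adj_tot; last by apply: hh; rewrite mem_rcons.
    apply: contraNneq vns => ->; rewrite -(perm_mem hpe).
    by move: hw; rewrite !inE mem_cat => /orP[->|->]; rewrite ?orbT.
  case: (ltnP q p) => [qltp|pleq].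
  + have e1 : p.-1 + q + 1 = n by move: hn p2; clia.
    have e2 : 0 < p.-1 by move: p2; clia.
    have e3 : 3 <= p.-1 + q by move: hn big p2; clia.
    have [b [W1 [W2 [h1 h2 h3' h4 h5]]]] := IH p.-1 q s' e1 e2 hq e3 us'' ss'.
    case: (boolP (has (adj v) (rcons W1 b))) => hh.
      have [W1' [? ? ?]] := ext b W1 W2 h1 h3' h5 hh.
      by exists b, W1', W2.
    have := allin b W1 W2 h5 hh => /indeg_all hall.
    have : indeg (b :: W1) v <= indeg s' v.
      by rewrite -(indeg_perm _ h5) -cat_cons indeg_cat leq_addr.
    rewrite hall /= h1 -indv; move: vmin hn qltp p2; clia.
  + have pq : p = q by move: qp pleq; clia.
    subst q.
    have e1 : p.-1 + p + 1 = n by move: hn p2; clia.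
    have e2 : 0 < p.-1 by move: p2; clia.
    have e3 : 3 <= p.-1 + p by move: p2; clia.
    have [b [W1 [W2 [h1 h2 h3' h4 h5]]]] := IH p.-1 p s' e1 e2 hq e3 us'' ss'.
    case: (boolP (has (adj v) (rcons W1 b))) => hh.
      have [W1' [? ? ?]] := ext b W1 W2 h1 h3' h5 hh.
      by exists b, W1', W2.
    have hall := allin b W1 W2 h5 hh.
    have hW2 : indeg W2 v = 0.
      have : indeg (b :: W1 ++ W2) v <= p.
        by rewrite (indeg_perm _ h5) -indv; move: vmin hn; clia.
      rewrite indeg_cons indeg_cat (@indeg_all W1) => [|w hw]; last first.
        by apply: hall; rewrite inE hw orbT.
      rewrite hall ?inE ?eqxx // h1; move: p2; clia.
    have vW2 : forall z, z \in W2 -> adj v z.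
      move=> z hz; apply: adj_tot; last by apply: indeg0 hW2 z hz.
      by apply: contraNneq vns => <-; rewrite -(perm_mem h5) inE mem_cat hz !orbT.
    have hu5 : uniq (b :: W1 ++ W2) by rewrite (perm_uniq h5).
    case: W1 h1 h3' h5 hh hall hu5 => [|y0 Y'] h1 h3' h5 hh hall hu5.
      by move: h1 p2 => /=; clia.
    case: W2 h2 h4 h5 hW2 vW2 hu5 => [|z0 Z'] h2 h4 h5 hW2 vW2 hu5.
      by move: h2 p2 => /=; clia.
    have y0z0 : y0 != z0.
      move: hu5 => /= /andP[_ /andP[hy _]].
      by apply: contraNneq hy => ->; rewrite mem_cat inE eqxx orbT.
    case hzy: (adj z0 y0).
    * case: Z' h2 h4 h5 hW2 vW2 hu5 => [|z1 Z''] h2 h4 h5 hW2 vW2 hu5.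
        by move: h2 p2 => /=; clia.
      exists b, [:: v, z1 & Z''], [:: z0, y0 & Y']; split.
      -- by move: h2 => /=.
      -- by move: h1 p2 => /=; clia.
      -- rewrite ipath_cons2 vW2 ?inE ?eqxx ?orbT //.
         by move: h4 => /= /andP[].
      -- by rewrite ipath_cons2 hzy.
      -- apply/permP => a; move: (permP h5 a) (permP ps a).
         rewrite /= !count_cat /=; clia.
    * have hyz : adj y0 z0 by apply: adj_tot; rewrite ?hzy // eq_sym.
      case/lastP: Z' h2 h4 h5 hW2 vW2 hu5 => [|Zm zl] h2 h4 h5 hW2 vW2 hu5.
        by move: h2 p2 => /=; clia.
      exists zl, [:: y0, z0 & Zm], (rcons (rcons Y' b) v); split.
      -- by move: h2; rewrite /= size_rcons.
      -- by move: h1 p2; rewrite /= !size_rcons; clia.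
      -- rewrite ipath_cons2 hyz /=.
         by move: h4; rewrite -rcons_cons ipath_rcons => /andP[].
      -- rewrite !ipath_rcons (ipath_behead h3') hall ?inE ?eqxx // vW2 //.
         by rewrite inE mem_rcons inE eqxx orbT.
      -- apply/permP => a; move: (permP h5 a) (permP ps a).
         rewrite /= -!cats1 !count_cat /= !count_cat /=; clia.
-
  have p2 : p = 2 by move: hn big h3 qp hq; clia.
  have q1 : q = 1 by move: hn big h3 qp hq; clia.
  have n3 : n = 3 by move: hn big h3 qp hq; clia.
  subst p q n.
  have [b bs [bmax1 bmax2]] := exists_max us sne.
  rewrite ss /= in bmax1.
  move: (perm_to_rem bs) (size_rem bs); rewrite ss /=; move: (rem b s) => s' ps ss'.
  have us' : uniq (b :: s') by rewrite -(perm_uniq ps).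
  have bns : b \notin s' by case/andP: us'.
  case: (boolP (has (adj b) s')) => [/hasP[w ws' hbw]|hnb].
  + move: (perm_to_rem ws') (size_rem ws'); rewrite ss' /=; move: (rem w s') => r pr sr.
    case: r pr sr => [|x [|y [|? ?]]] // pr _.
    have pall : perm_eq s [:: b; w; x; y].
      by apply: (perm_trans ps); rewrite perm_cons.
    have hu : uniq [:: b; w; x; y] by rewrite -(perm_uniq pall).
    move: hu; rewrite /= !inE !negb_or => /andP[/and3P[bw bx by'] /andP[/andP[wx wy] /andP[xy _]]].
    have ib : indeg s b = adj x b + adj y b.
      by rewrite (indeg_perm _ pall) !indeg_cons adj_irr (adj_asym hbw) /indeg big_nil addn0.
    rewrite ib in bmax1 bmax2.
    have [hxb hyb] : adj x b /\ adj y b.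
      by move: bmax1; case: (adj x b); case: (adj y b).
    case hwx: (adj w x).
      exists b, [:: w; x], [:: y]; split => //; first by rewrite ipath_cons2 ipath1 hwx hxb.
        by rewrite ipath1.
      by rewrite perm_sym.
    case hwy: (adj w y).
      exists b, [:: w; y], [:: x]; split => //; first by rewrite ipath_cons2 ipath1 hwy hyb.
        by rewrite ipath1.
      by apply/permP => a; rewrite (permP pall a) /=; clia.
    have hxw : adj x w by apply: adj_tot; rewrite ?hwx.
    have hyw : adj y w by apply: adj_tot; rewrite ?hwy.
    have := bmax2 w; rewrite (perm_mem pall) !inE eqxx orbT => /(_ isT).
    rewrite (indeg_perm _ pall) !indeg_cons adj_irr hbw hxw hyw hxb hyb.
    by rewrite /indeg big_nil.
  + have hall : forall x, x \in s' -> adj x b.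
      move=> x hx; apply: adj_tot; last by move/hasPn: hnb; apply.
      by apply: contraNneq bns => ->.
    case: s' ps ss' us' bns hnb hall => [|x1 [|x2 [|x3 [|? ?]]]] // ps _ us' bns hnb hall.
    move: us'; rewrite /= !inE !negb_or => /andP[_ /andP[/andP[x12 _] _]].
    case h12: (adj x1 x2).
      exists b, [:: x1; x2], [:: x3]; split => //.
      - by rewrite ipath_cons2 ipath1 h12 hall // !inE eqxx orbT.
      - by rewrite ipath1 hall // !inE eqxx !orbT.
      - by rewrite perm_sym.
    have h21 : adj x2 x1 by apply: adj_tot; rewrite ?h12.
    exists b, [:: x2; x1], [:: x3]; split => //.
    - by rewrite ipath_cons2 ipath1 h21 hall // !inE eqxx.
    - by rewrite ipath1 hall // !inE eqxx !orbT.
    - by apply/permP => a; rewrite (permP ps a) /=; clia.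
Qed.


Definition seg (w : T * seq T * seq T) := w.1.2 ++ w.1.1 :: rev w.2.
Definition src1 (w : T * seq T * seq T) := head w.1.1 w.1.2.
Definition src2 (w : T * seq T * seq T) := head w.1.1 w.2.
Definition valid (w : T * seq T * seq T) (pq : nat * nat) :=
  [&& size w.1.2 == pq.1, size w.2 == pq.2, ipath w.1.2 w.1.1 & ipath w.2 w.1.1].
Definition goodp (pq : nat * nat) := [&& 0 < pq.1, 0 < pq.2 & 3 <= pq.1 + pq.2].

Fixpoint dsf (ws : seq (T * seq T * seq T)) (h : T) : seq bool :=
  if ws is w :: ws' then adj (src2 w) (head h (map src1 ws')) :: dsf ws' h else [::].

Lemma extract ps : forall (s : seq T), all goodp ps -> uniq s ->
  size s = sumn [seq pq.1 + pq.2 + 1 | pq <- ps] ->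
  exists ws, all2 valid ws ps /\ perm_eq (flatten (map seg ws)) s.
Proof.
elim: ps => [|[p q] ps IH] s /=.
  by move=> _ _ /size0nil ->; exists [::].
move=> /andP[/and3P[hp hq h3] hps] us ss.
have us1 : uniq (take (p + q + 1) s) by apply: take_uniq.
have us2 : uniq (drop (p + q + 1) s) by apply: drop_uniq.
have ss1 : size (take (p + q + 1) s) = p + q + 1 by rewrite size_takel // ss leq_addr.
have ss2 : size (drop (p + q + 1) s) = sumn [seq pq.1 + pq.2 + 1 | pq <- ps].
  by rewrite size_drop ss addKn.
have [b [W1 [W2 [h1 h2 h3' h4 h5]]]] := wedge erefl hp hq h3 us1 ss1.
have [ws [hv hpe]] := IH _ hps us2 ss2.
exists ((b, W1, W2) :: ws); split.
  by rewrite /= /valid /= h1 h2 h3' h4 !eqxx hv.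
rewrite /= -[s](cat_take_drop (p + q + 1)).
apply: perm_cat => //.
apply: perm_trans h5; apply/permP => a.
by rewrite /seg /= !count_cat /= count_rev addnCA.
Qed.

Lemma seg_head w pq : valid w pq -> goodp pq -> seg w = src1 w :: behead (seg w).
Proof.
case: w => [[b W1] W2]; rewrite /valid /goodp /seg /src1 /= => /and4P[/eqP h1 _ _ _] /and3P[hp _ _].
by case: W1 h1 => [|y W1] //= h1; move: hp; rewrite -h1.
Qed.

Lemma src1_in w pq : valid w pq -> goodp pq -> src1 w \in seg w.
Proof. by move=> hv hg; rewrite (seg_head hv hg) inE eqxx. Qed.

Lemma src2_in w pq : valid w pq -> goodp pq -> src2 w \in seg w.
Proof.
case: w => [[b W1] W2]; rewrite /valid /goodp /seg /src2 /= => /and4P[_ /eqP h2 _ _] /and3P[_ hq _].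
case: W2 h2 => [|z W2] /=; first by move=> h2; move: hq; rewrite -h2.
by move=> _; rewrite mem_cat inE rev_cons mem_rcons inE eqxx !orbT.
Qed.

Lemma size_seg w pq : valid w pq -> size (seg w) = pq.1 + pq.2 + 1.
Proof.
case: w => [[b W1] W2]; rewrite /valid /seg /= => /and4P[/eqP h1 /eqP h2 _ _].
by rewrite size_cat /= size_rev h1 h2 addn1 addnS.
Qed.

Lemma segment w pq h : valid w pq -> goodp pq -> src2 w != h ->
  opath adj (src1 w) (behead (seg w) ++ [:: h])
    (nseq pq.1 true ++ nseq pq.2 false ++ [:: adj (src2 w) h]).
Proof.
case: w => [[b W1] W2]; case: pq => p q.
rewrite /valid /goodp /seg /src1 /src2 /= => /and4P[/eqP h1 /eqP h2 h3 h4] /and3P[hp hq _] hne.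
case: W1 h1 h3 => [|y Y] h1 h3; first by subst.
case: W2 h2 h4 hne => [|z Z] h2 h4 hne; first by subst.
have -> : behead (seg (b, y :: Y, z :: Z)) ++ [:: h] = rcons Y b ++ rcons (rev Z) z ++ [:: h].
  by rewrite /seg /= rev_cons -!cats1 -!catA /= -!catA.
have e1 : p = size (rcons Y b) by rewrite size_rcons.
have e2 : q = size (rcons (rev Z) z) by rewrite size_rcons size_rev.
rewrite opath_cat; last by rewrite size_nseq.
rewrite opath_cat; last by rewrite size_nseq.
have h3' : path adj y (rcons Y b) := h3.
rewrite /= {1}e1 opath_true h3' /= last_rcons {1}e2 opath_false last_rcons.
have -> : path (fun a c => adj c a) b (rcons (rev Z) z).
  by have := rev_path (fun a c => adj c a) z (rcons Z b); rewrite last_rcons belast_rcons rev_cons => ->.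
rewrite /arc andbT /=; case e: (adj z h) => //.
by apply: adj_tot; rewrite ?e.
Qed.


Lemma disj_neq (s1 s2 : seq T) x y : uniq (s1 ++ s2) -> x \in s1 -> y \in s2 -> x != y.
Proof.
rewrite cat_uniq => /and3P[_ hn _] hx hy; apply: contraNneq hn => e.
by apply/hasP; exists y; rewrite // -e.
Qed.

Lemma chain ws : forall w pq ps h, all2 valid (w :: ws) (pq :: ps) -> all goodp (pq :: ps) ->
  uniq (flatten (map seg (w :: ws))) -> h \notin flatten (map seg (w :: ws)) ->
  opath adj (src1 w) (behead (seg w) ++ flatten (map seg ws) ++ [:: h])
    (Pf (pq :: ps) (dsf (w :: ws) h)).
Proof.
elim: ws => [|w' ws IH] w pq ps h.
  case: ps => [|? ?] /=; last by rewrite andbF.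
  rewrite andbT cats0 => hv /andP[hg _] _ hh.
  apply: segment => //; apply: contraNneq hh => <-.
  exact: src2_in hv hg.
case: ps => [|pq' ps]; first by rewrite /= andbF.
move=> hva hga hu hh.
have [hv hvs] : valid w pq /\ all2 valid (w' :: ws) (pq' :: ps) by case/andP: hva.
have [hg hgs] : goodp pq /\ all goodp (pq' :: ps) by case/andP: hga.
have hv' : valid w' pq' by case/andP: hvs.
have hg' : goodp pq' by case/andP: hgs.
have -> : behead (seg w) ++ flatten [seq seg i | i <- w' :: ws] ++ [:: h] =
   (behead (seg w) ++ [:: src1 w']) ++ (behead (seg w') ++ flatten (map seg ws) ++ [:: h]).
  by rewrite /= (seg_head hv' hg') -!catA.
have -> : Pf [:: pq, pq' & ps] (dsf [:: w, w' & ws] h) =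
   (nseq pq.1 true ++ nseq pq.2 false ++ [:: adj (src2 w) (src1 w')]) ++
   Pf (pq' :: ps) (dsf (w' :: ws) h).
  by case: pq {hv hg hga hva} => p q; rewrite /= -!catA.
have hsz : size (seg w) = size (src1 w :: behead (seg w)) by rewrite -(seg_head hv hg).
rewrite opath_cat; last first.
  rewrite !size_cat !size_nseq /= addn1 -/(size (src1 w :: behead (seg w))) -hsz (size_seg hv) addn1 addnS.
  by rewrite addn0 addnS.
rewrite last_cat /=.
move: hu; rewrite [flatten _]/= => hu.
apply/andP; split.
  apply: segment => //.
  apply: (disj_neq hu); first exact: (src2_in hv hg).
  by rewrite /= mem_cat (src1_in hv' hg').
apply: IH => //.
  by move: hu; rewrite cat_uniq => /and3P[].
by apply: contra hh => hin; rewrite [flatten (map _ (w :: _))]/= mem_cat hin orbT.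
Qed.

End Deg.


Fixpoint pairs (k : seq nat) : seq (nat * nat) :=
  if k is x :: y :: k' then (x, y) :: pairs k' else [::].

Lemma pairs_spec m : forall k, size k = 2 * m -> all (fun x => 0 < x) k ->
  (forall i, i < m -> 3 <= nth 0 k (2 * i) + nth 0 k (2 * i).+1) ->
  [/\ Kf (pairs k) = k, size (pairs k) = m & all goodp (pairs k)].
Proof.
elim: m => [|m IH] [|x [|y k]] //=; rewrite ?mulnS // => /eqP; rewrite !eqSS => /eqP hs.
move=> /and3P[hx hy hk] h3.
have h3' : forall i, i < m -> 3 <= nth 0 k (2 * i) + nth 0 k (2 * i).+1.
  by move=> i hi; have := h3 i.+1 hi; rewrite mulnS.
have [e1 e2 e3] := IH k hs hk h3'.
rewrite e1 e2 e3 /goodp /= hx hy andbT /=; split => //.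
by have := h3 0 isT.
Qed.

Lemma sum_pairs ps : sumn [seq pq.1 + pq.2 + 1 | pq <- ps] = size ps + sumn (Kf ps).
Proof. elim: ps => [|[p q] ps IH] //=; rewrite IH; lia. Qed.

Ltac clia2 := repeat match goal with H : _ |- _ => clear H end; lia.

Lemma size_dsf (T : finType) (adj : rel T) ws h : size (dsf adj ws h) = size ws.
Proof. by elim: ws => //= w ws ->. Qed.

Theorem proposition8 (m : nat) (k : seq nat) :
  2 <= m ->
  size k = 2 * m ->
  all (fun x => 0 < x) k ->
  (forall i, i < m -> 3 <= nth 0 k (2 * i) + nth 0 k (2 * i).+1) ->
  forall (T : finType) (adj : rel T),
    tournament adj ->
    #|T| = m + sumn k ->
    exists l : seq nat,
      [/\ subdivision_blocks k l, m <= non_dilated k l & contains_cycle adj l].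
Proof.
move=> hm hk hpos h3 T adj tour hT.
have [hK hsz hg] := pairs_spec hk hpos h3.
move: (pairs k) hK hsz hg => ps hK hsz hg.
have hs : size (enum T) = sumn [seq pq.1 + pq.2 + 1 | pq <- ps].
  by rewrite sum_pairs -cardT hT hsz hK.
have [ws [hv hpe]] := extract tour hg (enum_uniq T) hs.
have hu : uniq (flatten (map (seg (T:=T)) ws)) by rewrite (perm_uniq hpe) enum_uniq.
have hfs : size (flatten (map (seg (T:=T)) ws)) = m + sumn k by rewrite (perm_size hpe) -cardT.
have hws : size ws = size ps by move: hv; rewrite all2E => /andP[/eqP].
case: ws hv hpe hu hfs hws => [|w0 [|w1 ws]] hv hpe hu hfs hws.
- by move: hws; rewrite hsz => e; move: hm; rewrite -e.
- by move: hws; rewrite hsz => e; move: hm; rewrite -e.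
case: ps hK hsz hg hs hv hws => [|pq0 [|pq1 ps]] hK hsz hg hs hv hws //.
have [hv0 hv1] : valid adj w0 pq0 /\ all2 (valid adj) (w1 :: ws) (pq1 :: ps) by case/andP: hv.
have [hg0 hg1] : goodp pq0 /\ all goodp (pq1 :: ps) by case/andP: hg.
have hv1' : valid adj w1 pq1 by case/andP: hv1.
have hg1' : goodp pq1 by case/andP: hg1.
pose x0 := src1 w0.
pose ds := dsf adj [:: w0, w1 & ws] x0.
pose rest := behead (seg w0) ++ flatten (map (seg (T:=T)) (w1 :: ws)).
have hfull : flatten (map (seg (T:=T)) [:: w0, w1 & ws]) = x0 :: rest.
  by rewrite /rest [flatten _]/= (seg_head hv0 hg0).
have hop : opath adj x0 (rcons rest x0) (Pf [:: pq0, pq1 & ps] ds).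
  have -> : rcons rest x0 = (behead (seg w0) ++ [:: src1 w1]) ++
      (behead (seg w1) ++ flatten (map (seg (T:=T)) ws) ++ [:: x0]).
    by rewrite /rest [flatten (map _ (w1 :: _))]/= (seg_head hv1' hg1') -cats1 -!catA.
  have -> : Pf [:: pq0, pq1 & ps] ds =
      (nseq pq0.1 true ++ nseq pq0.2 false ++ [:: adj (src2 w0) (src1 w1)]) ++
      Pf (pq1 :: ps) (dsf adj (w1 :: ws) x0).
    by rewrite /ds; case: pq0 {hv hg hv0 hg0 hK hs hsz hws} => p q; rewrite /= -!catA.
  have hsz0 : size (seg w0) = size (src1 w0 :: behead (seg w0)) by rewrite -(seg_head hv0 hg0).
  rewrite opath_cat; last first.
    rewrite !size_cat !size_nseq /= addn1 -/(size (src1 w0 :: behead (seg w0))) -hsz0.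
    by rewrite (size_seg hv0) addn1 addnA addn1.
  rewrite last_cat /=; apply/andP; split.
    apply: segment => //.
    apply: (disj_neq (s1 := seg w0) hu); first exact: (src2_in hv0 hg0).
    by rewrite /= mem_cat (src1_in hv1' hg1').
  apply: chain => //.
    by move: hu; rewrite [flatten _]/= cat_uniq => /and3P[].
  move: hu; rewrite [flatten (map _ (w0 :: _))]/= cat_uniq => /and3P[_ hn _].
  apply: contra hn => hin; apply/hasP; exists x0 => //.
  exact: (src1_in hv0 hg0).
have hsd : size [:: pq0, pq1 & ps] = size ds by rewrite size_dsf.
have hPfL := PfL (last false ds) hsd.
pose c0 := last false ds.
have hlast : last c0 ds = c0 by rewrite /c0 /ds [dsf _ _ _]/=.
rewrite -/c0 hlast in hPfL.
pose l := Lf c0 [:: pq0, pq1 & ps] ds.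
rewrite -/l in hPfL.
exists l; split.
- rewrite -hK; split; first exact: size_LfK.
  by move=> i _; exact: nth_LfK.
- have := nd_Lf c0 hsd; rewrite hlast -/l hK => e; move: e hsz; clia2.
have hux : uniq (x0 :: rest) by rewrite -hfull.
have hsr : 0 < size rest.
  by move: hfs; rewrite hfull /= => e; move: e hm; clia2.
clear hlast hfull hfs; clearbody l c0 ds rest x0.
move: (Pf _ ds) hop hPfL => O hop hPfL.
have hsO := opath_size hop.
case: c0 hPfL => /= hPfL.
- case/lastP: rest hop hux hsr hsO => [|rest' z] //= hop hux _ hsO.
  case/lastP: O hop hPfL hsO => [|O' o] hop hPfL hsO; first by move: hsO; rewrite !size_rcons.
  have hsO' : size (rcons rest' z) = size O' by move: hsO; rewrite !size_rcons => -[].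
  move: hop; rewrite -[rcons (rcons rest' z) x0]cats1 -[rcons O' o]cats1 opath_cat // last_rcons /= andbT => /andP[hop1 hop2].
  move: hPfL; rewrite -rcons_cons cats1 => /rcons_inj [hO ho].
  subst o.
  apply: (cycle_of (x := z) (s := x0 :: rest')).
  + move: hux; rewrite rcons_uniq mem_rcons !inE negb_or => /andP[/andP[a b] /andP[c d]].
    by rewrite /= inE negb_or eq_sym a b c d.
  + by rewrite -(size_pat true) -hO /= -hsO' size_rcons.
  + by rewrite -hO /=; apply/andP; split.
- move: hPfL; rewrite cats0 => hO; subst O.
  apply: (cycle_of hux) => //.
  by rewrite -(size_pat true) hsO size_rcons.
Qed.
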